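(* Let $\Omega_2=\{\omega_1,\omega_2\}$ with $\omega_1\neq\omega_2$, and $\mathcal{A}_2=2^{\Omega_2}$. A $q$-measure $\mu$ on $\mathcal{A}_2$ actualizes the coevent $\omega_1^*\omega_2^*$ if and only if $\mu(\{\omega_1\})=\mu(\{\omega_2\})=0$ and $\mu(\Omega_2)>0$.
   Context: Let $\Omega$ be a finite nonempty set and $\mathcal{A}=2^\Omega$. A coevent is a map $\phi:\mathcal{A}\to\{0,1\}$ with $\phi(\emptyset)=0$. For $\omega\in\Omega$ the evaluation map $\omega^*$ is the coevent with $\omega^*(A)=1$ if $\omega\in A$ and $0$ otherwise. Coevents are combined pointwise: $(\phi\oplus\psi)(A)=\phi(A)+\psi(A) \bmod 2$ and $(\phi\psi)(A)=\phi(A)\psi(A)$. For $f:\Omega\to[0,\infty)$ and a coevent $\phi$, the $q$-integral is $\int f\,d\phi=\int_0^\infty \phi(\{\omega\in\Omega: f(\omega)>\lambda\})\,d\lambda$ (Lebesgue measure in $\lambda$), and for $A\in\mathcal{A}$, $\int_A f\,d\phi=\int f\chi_A\,d\phi$. A $q$-measure is a map $\mu:\mathcal{A}\to[0,\infty)$ such that for all pairwise disjoint $A,B,C\in\mathcal{A}$: $\mu(A\cup B\cup C)=\mu(A\cup B)+\mu(A\cup C)+\mu(B\cup C)-\mu(A)-\mu(B)-\mu(C)$. The $q$-measure $\mu$ actualizes $\phi$ if there is a symmetric function $f:\Omega\times\Omega\to(0,\infty)$ such that for all $A\in\mathcal{A}$, $\mu(A)=\int g_A\,d\phi$, where $g_A(\omega')=\int_A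 f(\cdot,\omega')\,d\phi$ (the $q$-integral over $A$ of $\omega\mapsto f(\omega,\omega')$). *)

(* Defs.v *)
From Stdlib Require Import Reals.
From mathcomp Require Import all_boot.
Set Implicit Arguments. Unset Strict Implicit. Unset Printing Implicit Defensive.

Open Scope R_scope.

Definition coevent (T : finType) (phi : {set T} -> bool) : Prop := phi set0 = false.

Definition evalc (T : finType) (w : T) : {set T} -> bool := fun A => w \in A.

Definition comul (T : finType) (phi psi : {set T} -> bool) : {set T} -> bool :=
  fun A => phi A && psi A.
Definition coadd (T : finType) (phi psi : {set T} -> bool) : {set T} -> bool :=
  fun A => xorb (phi A) (psi A).

Definition b2R (b : bool) : R := if b then 1 else 0.
Definition Rltb (x y : R) : bool := if Rlt_dec x y then true else false.

Definition levelset (T : finType) (f : T -> R) (l : R) : {set T} :=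
  [set w | Rltb l (f w)].

(* qint_is f phi v : the q-integral  int_0^oo phi({f > l}) dl  equals v.
   Since the integrand vanishes for l >= max f, the improper integral over
   [0,oo) is the (Riemann) integral over [0,M] for any upper bound M of f. *)
Definition qint_is (T : finType) (f : T -> R) (phi : {set T} -> bool) (v : R) : Prop :=
  forall M : R, 0 <= M -> (forall w, f w <= M) ->
    exists pr : Riemann_integrable (fun l => b2R (phi (levelset f l))) 0 M,
      RiemannInt pr = v.

Definition is_qmeasure (T : finType) (mu : {set T} -> R) : Prop :=
  (forall A, 0 <= mu A) /\
  (forall A B C : {set T},
      [disjoint A & B] -> [disjoint A & C] -> [disjoint B & C] ->
      mu (A :|: B :|: C) =
        mu (A :|: B) + mu (A :|: C) + mu (B :|: C) - mu A - mu B - mu C).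

Definition actualizes (T : finType) (mu : {set T} -> R) (phi : {set T} -> bool) : Prop :=
  exists f : T -> T -> R,
    (forall x y, f x y = f y x) /\ (forall x y, 0 < f x y) /\
    exists g : {set T} -> T -> R,
      (forall (A : {set T}) (w' : T), qint_is (fun w => if w \in A then f w w' else 0) phi (g A w')) /\
      (forall A : {set T}, qint_is (g A) phi (mu A)).

(* Main.v *)
Require Import Defs.
From Stdlib Require Import Reals Lra RList RiemannInt_SF RiemannInt.
From mathcomp Require Import all_boot.
Open Scope R_scope.

Lemma open_cte_step (f : R -> R) a b c : a <= b -> (forall x, a < x < b -> f x = c) ->
  IsStepFun f a b.
Proof.
  intros Hab Hf. exists (cons a (cons b nil)). exists (cons c nil).
  unfold adapted_couple; repeat split.
  - unfold ordered_Rlist; intros i Hi; simpl in Hi; inversion Hi;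
      [ simpl; assumption | exfalso; inversion H0 ].
  - simpl; unfold Rmin; destruct (Rle_dec a b); lra.
  - simpl; unfold Rmax; destruct (Rle_dec a b); lra.
  - unfold constant_D_eq, open_interval; intros i Hi; simpl in Hi;
      inversion Hi; [ intros; simpl in *; apply Hf; lra | exfalso; inversion H0 ].
Qed.

Lemma open_cte_int (f : R -> R) a b c : a <= b -> (forall x, a < x < b -> f x = c) ->
  { pr : Riemann_integrable f a b | RiemannInt pr = c * (b - a) }.
Proof.
  intros Hab Hf.
  assert (pr : Riemann_integrable f a b).
  { intro eps. exists (mkStepFun (@open_cte_step f a b c Hab Hf)).
    exists (mkStepFun (StepFun_P4 a b 0)). split.
    - intros t _; simpl; unfold Rminus; rewrite Rplus_opp_r Rabs_R0; unfold fct_cte; lra.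
    - rewrite StepFun_P18 Rmult_0_l Rabs_R0; apply (cond_pos eps). }
  exists pr. rewrite (RiemannInt_P18 pr (RiemannInt_P14 a b c) Hab Hf).
  apply RiemannInt_P15.
Qed.

Lemma ind_int (h : R -> R) (m M : R) : (forall l, h l = b2R (Rltb l m)) -> 0 <= M -> m <= M ->
  exists pr : Riemann_integrable h 0 M, RiemannInt pr = Rmax 0 m.
Proof.
  intros Hh HM HmM.
  destruct (Rle_dec m 0) as [Hm|Hm].
  - assert (H : forall x, 0 < x < M -> h x = 0).
    { intros x Hx; rewrite Hh; unfold b2R, Rltb; destruct (Rlt_dec x m); simpl; lra. }
    destruct (@open_cte_int h 0 M 0 HM H) as [pr Hpr]. exists pr. rewrite Hpr.
    unfold Rmax; destruct (Rle_dec 0 m); lra.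
  - assert (H1 : forall x, 0 < x < m -> h x = 1).
    { intros x Hx; rewrite Hh; unfold b2R, Rltb; destruct (Rlt_dec x m); simpl; lra. }
    assert (H2 : forall x, m < x < M -> h x = 0).
    { intros x Hx; rewrite Hh; unfold b2R, Rltb; destruct (Rlt_dec x m); simpl; lra. }
    assert (Hm0 : 0 <= m) by lra.
    destruct (@open_cte_int h 0 m 1 Hm0 H1) as [pr1 Hpr1].
    destruct (@open_cte_int h m M 0 HmM H2) as [pr2 Hpr2].
    exists (RiemannInt_P24 pr1 pr2).
    rewrite -(RiemannInt_P26 pr1 pr2) Hpr1 Hpr2.
    unfold Rmax; destruct (Rle_dec 0 m); lra.
Qed.

Lemma phi_level (T : finType) (w1 w2 : T) (F : T -> R) l :
  b2R (comul (evalc w1) (evalc w2) (levelset F l)) = b2R (Rltb l (Rmin (F w1) (F w2))).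
Proof.
  rewrite /comul /evalc /levelset !inE; unfold b2R, Rltb, Rmin.
  destruct (Rle_dec (F w1) (F w2)); destruct (Rlt_dec l (F w1)); destruct (Rlt_dec l (F w2));
  simpl; try reflexivity; lra.
Qed.

Lemma qint_exist (T : finType) (w1 w2 : T) (F : T -> R) :
  qint_is F (comul (evalc w1) (evalc w2)) (Rmax 0 (Rmin (F w1) (F w2))).
Proof.
  intros M HM HF. apply ind_int; [intro l; apply phi_level | exact HM |].
  apply Rle_trans with (F w1); [apply Rmin_l | apply HF].
Qed.

Lemma qint_uniq (T : finType) (w1 w2 : T) (hT : forall w : T, w = w1 \/ w = w2)
  (F : T -> R) v : qint_is F (comul (evalc w1) (evalc w2)) v -> v = Rmax 0 (Rmin (F w1) (F w2)).
Proof.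
  intros H. set M := Rmax 0 (Rmax (F w1) (F w2)).
  have HM : 0 <= M by apply Rmax_l.
  have HF : forall w, F w <= M.
  { intro w; destruct (hT w) as [->| ->]; unfold M.
    - eapply Rle_trans; [apply Rmax_l | apply Rmax_r].
    - eapply Rle_trans; [apply Rmax_r | apply Rmax_r]. }
  destruct (H M HM HF) as [pr Hpr].
  destruct (@qint_exist _ w1 w2 F M HM HF) as [pr' Hpr'].
  rewrite -Hpr -Hpr'; apply RiemannInt_P5.
Qed.

Lemma rmm0l a b : a = 0 -> 0 <= b -> Rmax 0 (Rmin a b) = 0.
Proof. intros; unfold Rmax, Rmin; destruct (Rle_dec a b); destruct (Rle_dec 0 _); lra. Qed.
Lemma rmm0r a b : b = 0 -> 0 <= a -> Rmax 0 (Rmin a b) = 0.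
Proof. intros; unfold Rmax, Rmin; destruct (Rle_dec a b); destruct (Rle_dec 0 _); lra. Qed.
Lemma rmmpos a b : 0 < a -> 0 < b -> 0 < Rmax 0 (Rmin a b).
Proof. intros; unfold Rmax, Rmin; destruct (Rle_dec a b); destruct (Rle_dec 0 _); lra. Qed.
Lemma rmmcc c : 0 < c -> Rmax 0 (Rmin c c) = c.
Proof. intros; unfold Rmax, Rmin; destruct (Rle_dec c c); destruct (Rle_dec 0 _); lra. Qed.

Theorem theorem4p2 (T : finType) (w1 w2 : T) (hne : w1 <> w2)
  (hT : forall w : T, w = w1 \/ w = w2)
  (mu : {set T} -> R) (hmu : is_qmeasure mu) :
  actualizes mu (comul (evalc w1) (evalc w2)) <->
  (mu [set w1] = 0 /\ mu [set w2] = 0 /\ 0 < mu [set: T]).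
Proof.
  have n21 : (w2 == w1) = false by apply/eqP => E; apply hne; rewrite E.
  have n12 : (w1 == w2) = false by apply/eqP.
  split.
  - move=> [f [fsym [fpos [g [Hg Hmu]]]]].
    have Eg : forall A w', g A w' = Rmax 0 (Rmin (if w1 \in A then f w1 w' else 0)
                                              (if w2 \in A then f w2 w' else 0)).
    { move=> A w'; exact: (@qint_uniq _ _ _ hT _ _ (Hg A w')). }
    have Emu : forall A, mu A = Rmax 0 (Rmin (g A w1) (g A w2)).
    { move=> A; exact: (@qint_uniq _ _ _ hT _ _ (Hmu A)). }
    have Hg1 : forall w', g [set w1] w' = 0.
    { move=> w'; rewrite Eg !inE eqxx n21; apply rmm0r => //; left; apply fpos. }
    have Hg2 : forall w', g [set w2] w' = 0.
    { move=> w'; rewrite Eg !inE eqxx n12; apply rmm0l => //; left; apply fpos. }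
    split; [|split].
    + rewrite Emu !Hg1; apply rmm0l; lra.
    + rewrite Emu !Hg2; apply rmm0l; lra.
    + rewrite Emu !Eg !inE; apply rmmpos; apply rmmpos; apply fpos.
  - move=> [H1 [H2 H3]].
    have H0 : mu set0 = 0.
    { destruct hmu as [_ hadd].
      have d0 : [disjoint (set0 : {set T}) & set0] by rewrite -setI_eq0 setI0 eqxx.
      have := hadd set0 set0 set0 d0 d0 d0.
      rewrite !set0U; lra. }
    set c := mu [set: T].
    exists (fun _ _ => c); split; [by [] | split; [by move=> _ _ | ]].
    exists (fun (A : {set T}) (w' : T) => Rmax 0 (Rmin (if w1 \in A then c else 0) (if w2 \in A then c else 0))).
    split.
    + move=> A w'; exact: (@qint_exist _ w1 w2 (fun w => if w \in A then c else 0)).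
    + move=> A.
      have Hcp : 0 < c by [].
      have Hc : 0 <= c by lra.
      have -> : mu A = Rmax 0 (Rmin (Rmax 0 (Rmin (if w1 \in A then c else 0) (if w2 \in A then c else 0)))
                                (Rmax 0 (Rmin (if w1 \in A then c else 0) (if w2 \in A then c else 0)))).
      have e1 : Rmax 0 (Rmin c 0) = 0 by apply rmm0r; lra.
      have e2 : Rmax 0 (Rmin 0 c) = 0 by apply rmm0l; lra.
      have e3 : Rmax 0 (Rmin 0 0) = 0 by apply rmm0l; lra.
      { case h1: (w1 \in A); case h2: (w2 \in A).
        - have -> : A = [set: T].
          { apply/setP => w; rewrite inE; by destruct (hT w) as [->| ->]. }
          rewrite !rmmcc //.
        - have -> : A = [set w1].
          { apply/setP => w; rewrite inE; destruct (hT w) as [->| ->]; by rewrite ?h1 ?h2 ?eqxx ?n21. }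
          by rewrite H1 ?e1 ?e2 ?e3 ?e3.
        - have -> : A = [set w2].
          { apply/setP => w; rewrite inE; destruct (hT w) as [->| ->]; by rewrite ?h1 ?h2 ?eqxx ?n12. }
          by rewrite H2 ?e1 ?e2 ?e3 ?e3.
        - have -> : A = set0.
          { apply/setP => w; rewrite inE; destruct (hT w) as [->| ->]; by rewrite ?h1 ?h2. }
          by rewrite H0 ?e1 ?e2 ?e3 ?e3. }
      exact: (@qint_exist _ w1 w2 (fun w' => Rmax 0 (Rmin (if w1 \in A then c else 0) (if w2 \in A then c else 0)))).
Qed.
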